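(* Suppose $f\colon[0,\infty)\to[0,\infty)$ satisfies (M), (S) and (L). Then for any $\varepsilon\in(0,q_f)$ there exists $C\ge1$ such that $$C^{-1}\sigma^{\varepsilon-q_f}\le f(F^{-1}(\sigma))\le C\sigma^{-\varepsilon-q_f}\quad\text{and}\quad F^{-1}(\sigma)\le C\sigma^{1-q_f-\varepsilon}$$ for all sufficiently small $\sigma>0$.
   Context: (M) $f$ continuous, nondecreasing, $f(u)>0$ for $u>0$. (S) there is $\tau_0>0$ with $f\in C^1([\tau_0,\infty))$ and $\int_{\tau_0}^\infty ds/f(s)<\infty$. $F(u)=\int_u^\infty ds/f(s)$ for $u>0$, $F_0=\lim_{u\to0}F(u)$; $F$ is a strictly decreasing bijection $(0,\infty)\to(0,F_0)$ with inverse $F^{-1}\colon(0,F_0)\to(0,\infty)$. (L) $q_f:=\lim_{u\to\infty}f'(u)F(u)$ exists and is finite. *)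

(* Defs.v *)
From Stdlib Require Import Reals ClassicalEpsilon.
From Coquelicot Require Import Coquelicot.
Open Scope R_scope.

Definition Fint (f : R -> R) (u : R) : R :=
  RInt_gen (fun s => / f s) (at_point u) (Rbar_locally p_infty).

(* F^{-1}(sigma): the (unique, under (M),(S)) u > 0 with F(u) = sigma. *)
Definition Finv (f : R -> R) (sigma : R) : R :=
  epsilon (inhabits 0) (fun u => 0 < u /\ Fint f u = sigma).

Definition cond_M (f : R -> R) : Prop :=
  (forall u, 0 <= u -> 0 <= f u) /\
  (forall u, 0 < u -> continuous f u) /\
  filterlim f (at_right 0) (locally (f 0)) /\
  (forall x y, 0 <= x -> x <= y -> f x <= f y) /\
  (forall u, 0 < u -> 0 < f u).

Definition cond_S (f : R -> R) : Prop :=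
  exists tau0, 0 < tau0 /\
    (forall u, tau0 < u -> ex_derive f u /\ continuous (Derive f) u) /\
    ex_RInt_gen (fun s => / f s) (at_point tau0) (Rbar_locally p_infty).

Definition cond_L (f : R -> R) (q : R) : Prop :=
  is_lim (fun u => Derive f u * Fint f u) p_infty q.

(* Main.v *)
Require Import Defs.
From Stdlib Require Import Reals Lra ClassicalEpsilon Classical.
From Coquelicot Require Import Coquelicot.
Open Scope R_scope.

Lemma nonincr (h dh : R -> R) (U : R) :
  (forall x, U <= x -> is_derive h x (dh x)) ->
  (forall x, U <= x -> dh x <= 0) ->
  forall x y, U <= x -> x <= y -> h y <= h x.
Proof.
  intros Hd Hn x y Hx Hxy.
  destruct (Req_dec x y) as [->|Hne]; [lra|].
  destruct (MVT_gen h x y dh) as [c [Hc Heq]]; cbv zeta in *.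
  - intros z Hz. rewrite Rmin_left, Rmax_right in Hz by lra. apply Hd. lra.
  - intros z Hz. rewrite Rmin_left, Rmax_right in Hz by lra.
    apply continuity_pt_filterlim. apply (ex_derive_continuous h z).
    exists (dh z). apply Hd. lra.
  - rewrite Rmin_left, Rmax_right in Hc by lra.
    assert (dh c <= 0) by (apply Hn; lra). nra.
Qed.

Lemma deriv_nonneg (f : R -> R) x l :
  (forall x y, 0 <= x -> x <= y -> f x <= f y) -> 0 < x -> is_derive f x l -> 0 <= l.
Proof.
  intros Hm Hx Hd. apply is_derive_Reals in Hd.
  destruct (Rle_lt_dec 0 l) as [|Hl]; [auto|]. exfalso.
  destruct (Hd (-l)) as [d Hdel]; [lra|].
  pose proof (cond_pos d) as Hdp.
  specialize (Hdel (d/2)).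
  assert (Hq : 0 <= (f (x + d/2) - f x) / (d/2)).
  { apply Rdiv_le_0_compat; [|lra]. assert (f x <= f (x + d/2)) by (apply Hm; lra). lra. }
  assert (H : Rabs ((f (x + d/2) - f x) / (d/2) - l) < - l).
  { apply Hdel; [lra|]. rewrite Rabs_pos_eq; lra. }
  apply Rabs_def2 in H. lra.
Qed.

Lemma is_derive_ln_comp (f : R -> R) x df :
  is_derive f x df -> 0 < f x -> is_derive (fun y => ln (f y)) x (df / f x).
Proof.
  intros Hd Hp.
  assert (Hl : is_derive ln (f x) (/ f x)) by (apply is_derive_Reals, derivable_pt_lim_ln, Hp).
  pose proof (is_derive_comp ln f x _ _ Hl Hd) as H.
  exact H.
Qed.

Lemma F_deriv (f : R -> R) : cond_M f -> cond_S f ->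
  forall u, 0 < u -> is_derive (Fint f) u (- / f u).
Proof.
  intros [Hnn [Hc [_ [Hmono Hpos]]]] [tau0 [Ht [_ Hex]]].
  set (g := fun s => / f s).
  assert (HI : exists I0 : R, is_RInt_gen g (at_point tau0) (Rbar_locally p_infty) I0)
    by (exists (RInt_gen g (at_point tau0) (Rbar_locally p_infty)); exact (RInt_gen_correct _ Hex)).
  destruct HI as [I0 HI0].
  assert (Hcont : forall x, 0 < x -> continuous g x).
  { intros x Hx. apply continuous_Rinv_comp; [apply Hc; lra|]. apply Rgt_not_eq, Hpos, Hx. }
  assert (Hex2 : forall x, 0 < x -> ex_RInt g x tau0).
  { intros x Hx. apply (ex_RInt_continuous (V:=R_CompleteNormedModule)). intros z Hz. apply Hcont.
    assert (0 < Rmin x tau0) by (apply Rmin_glb_lt; lra). lra. }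
  assert (Hform : forall x, 0 < x -> Fint f x = RInt g x tau0 + I0).
  { intros x Hx. unfold Fint. apply is_RInt_gen_unique.
    change (RInt g x tau0 + I0) with (plus (RInt g x tau0) I0).
    apply (is_RInt_gen_Chasles (V:=R_NormedModule) g tau0); [|exact HI0].
    apply is_RInt_gen_at_point. exact (RInt_correct g x tau0 (Hex2 x Hx)). }
  intros u Hu.
  apply is_derive_ext_loc with (fun x => RInt g x tau0 + I0).
  { apply (locally_interval _ u 0 p_infty); simpl; auto.
    intros y Hy _. symmetry. apply Hform, Hy. }
  assert (H1 : is_derive (fun x => RInt g x tau0) u (opp (g u))).
  { apply (is_derive_RInt' (V:=R_CompleteNormedModule) g _ u tau0).
    * apply (locally_interval _ u 0 p_infty); simpl; auto.
      intros y Hy _. exact (RInt_correct g y tau0 (Hex2 y Hy)).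
    * apply Hcont, Hu. }
  apply is_derive_Reals; apply is_derive_Reals in H1.
  replace (- / f u) with (opp (g u) + 0) by (unfold g, opp; simpl; ring).
  apply (derivable_pt_lim_plus (fun x => RInt g x tau0) (fun _ => I0)); [exact H1|].
  apply derivable_pt_lim_const.
Qed.

Lemma eventually_L f qf : cond_M f -> cond_S f -> cond_L f qf ->
  forall e, 0 < e <= qf -> exists U0, 1 <= U0 /\ forall u, U0 <= u ->
   is_derive f u (Derive f u) /\ 0 < Fint f u /\
   qf - e < Derive f u * Fint f u < qf + e.
Proof.
  intros HM HS HL e He.
  destruct HS as [tau0 [Ht [Hd _]]].
  destruct HM as [Hnn [Hc [_ [Hmono Hpos]]]].
  apply is_lim_spec in HL.
  destruct (HL (mkposreal e (proj1 He))) as [M HMx]. simpl in HMx.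
  exists (Rmax (Rmax M tau0) 0 + 1). split.
  { pose proof (Rmax_r (Rmax M tau0) 0). lra. }
  intros u Hu.
  pose proof (Rmax_l (Rmax M tau0) 0). pose proof (Rmax_r (Rmax M tau0) 0).
  pose proof (Rmax_l M tau0). pose proof (Rmax_r M tau0).
  assert (Hdu : is_derive f u (Derive f u)).
  { apply Derive_correct. apply Hd. lra. }
  assert (Hq1 := HMx u ltac:(lra)). apply Rabs_def2 in Hq1.
  assert (Hf0 : 0 <= Derive f u) by (apply (deriv_nonneg f u _ Hmono); [lra|exact Hdu]).
  split; [exact Hdu|]. split; [|lra].
  destruct (Rle_lt_dec (Fint f u) 0) as [Hle|]; [|auto].
  assert (Derive f u * Fint f u <= 0) by nra. lra.
Qed.

Lemma G_deriv f c u df : cond_M f -> cond_S f -> 0 < u -> is_derive f u df ->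
  0 < Fint f u ->
  is_derive (fun x => ln (f x) + c * ln (Fint f x)) u (df / f u + c * ((- / f u) / Fint f u)).
Proof.
  intros HM HS Hu Hdf HF.
  assert (Hfp : 0 < f u) by (destruct HM as [_ [_ [_ [_ Hp]]]]; apply Hp, Hu).
  pose proof (is_derive_ln_comp f u df Hdf Hfp) as H1.
  pose proof (is_derive_ln_comp (Fint f) u _ (F_deriv f HM HS u Hu) HF) as H2.
  apply is_derive_Reals in H1. apply is_derive_Reals in H2. apply is_derive_Reals.
  apply (derivable_pt_lim_plus (fun x => ln (f x)) (fun x => c * ln (Fint f x))); [exact H1|].
  apply (derivable_pt_lim_scal (fun x => ln (Fint f x))). exact H2.
Qed.

Lemma k_deriv f K a u : cond_M f -> cond_S f -> 0 < u -> 0 < Fint f u ->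
  is_derive (fun x => x + K * exp ((1 - a) * ln (Fint f x))) u
    (1 + K * (exp ((1 - a) * ln (Fint f u)) * ((1 - a) * ((- / f u) / Fint f u)))).
Proof.
  intros HM HS Hu HF.
  pose proof (is_derive_ln_comp (Fint f) u _ (F_deriv f HM HS u Hu) HF) as H2.
  apply is_derive_Reals in H2. apply is_derive_Reals.
  apply (derivable_pt_lim_plus id (fun x => K * exp ((1 - a) * ln (Fint f x)))).
  { apply derivable_pt_lim_id. }
  apply (derivable_pt_lim_scal (fun x => exp ((1 - a) * ln (Fint f x)))).
  apply (derivable_pt_lim_comp (fun x => (1 - a) * ln (Fint f x)) exp).
  - apply (derivable_pt_lim_scal (fun x => ln (Fint f x))). exact H2.
  - apply derivable_pt_lim_exp.
Qed.

Lemma exp_le' x y : x <= y -> exp x <= exp y.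
Proof. intros [H|H]; [left; apply exp_increasing, H|subst; lra]. Qed.

Lemma ln_le' x y : 0 < x -> x <= y -> ln x <= ln y.
Proof. intros Hx [H|H]; [left; apply ln_increasing; auto|subst; lra]. Qed.

Lemma bounds f qf : cond_M f -> cond_S f -> cond_L f qf ->
  forall e, 0 < e <= qf -> exists U0 A B, 1 <= U0 /\ forall u, U0 <= u ->
   0 < Fint f u /\
   exp B * exp (- (qf - e) * ln (Fint f u)) <= f u /\
   f u <= exp A * exp (- (qf + e) * ln (Fint f u)).
Proof.
  intros HM HS HL e He.
  destruct (eventually_L f qf HM HS HL e He) as [U0 [HU0 Hev]].
  assert (Hfp : forall u, 0 < u -> 0 < f u) by (destruct HM as [_ [_ [_ [_ Hp]]]]; exact Hp).
  set (G := fun c x => ln (f x) + c * ln (Fint f x)).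
  set (dG := fun c x => Derive f x / f x + c * ((- / f x) / Fint f x)).
  assert (HdG : forall c x, U0 <= x -> is_derive (G c) x (dG c x)).
  { intros c x Hx. destruct (Hev x Hx) as [Hd [HF _]].
    apply G_deriv; auto; lra. }
  assert (Hsgn : forall c x, U0 <= x -> dG c x = (Derive f x * Fint f x - c) / (f x * Fint f x)).
  { intros c x Hx. destruct (Hev x Hx) as [Hd [HF _]]. pose proof (Hfp x ltac:(lra)).
    unfold dG. field. split; lra. }
  exists U0, (G (qf + e) U0), (G (qf - e) U0). split; [exact HU0|].
  intros u Hu. destruct (Hev u Hu) as [_ [HF Hb]]. split; [exact HF|].
  pose proof (Hfp u ltac:(lra)) as Hfu.
  assert (Hup : G (qf + e) u <= G (qf + e) U0).
  { apply (nonincr (G (qf + e)) (dG (qf + e)) U0); [apply HdG| |lra|exact Hu].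
    intros x Hx. rewrite Hsgn by exact Hx. destruct (Hev x Hx) as [_ [HFx Hbx]].
    pose proof (Hfp x ltac:(lra)).
    assert (0 < / (f x * Fint f x)) by (apply Rinv_0_lt_compat; apply Rmult_lt_0_compat; lra).
    unfold Rdiv. nra. }
  assert (Hlo : - G (qf - e) u <= - G (qf - e) U0).
  { apply (nonincr (fun x => - G (qf - e) x) (fun x => - dG (qf - e) x) U0); [| |lra|exact Hu].
    - intros x Hx. apply is_derive_Reals. apply derivable_pt_lim_opp.
      apply is_derive_Reals. apply HdG, Hx.
    - intros x Hx. rewrite Hsgn by exact Hx. destruct (Hev x Hx) as [_ [HFx Hbx]].
      pose proof (Hfp x ltac:(lra)).
      assert (0 <= (Derive f x * Fint f x - (qf - e)) / (f x * Fint f x)); [|lra].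
      apply Rdiv_le_0_compat; [lra|]. apply Rmult_lt_0_compat; lra. }
  unfold G in Hup, Hlo.
  rewrite <- (exp_ln (f u)) by exact Hfu.
  rewrite <- !exp_plus. split; apply exp_le'.
  all: unfold G; lra.
Qed.

Lemma k_bound f U0 A a : cond_M f -> cond_S f -> a <> 1 -> 1 <= U0 ->
  (forall u, U0 <= u -> 0 < Fint f u /\ f u <= exp A * exp (- a * ln (Fint f u))) ->
  forall u, U0 <= u ->
   u + exp A / (1 - a) * exp ((1 - a) * ln (Fint f u)) <=
   U0 + exp A / (1 - a) * exp ((1 - a) * ln (Fint f U0)).
Proof.
  intros HM HS Ha HU0 Hb.
  assert (Hfp : forall u, 0 < u -> 0 < f u) by (destruct HM as [_ [_ [_ [_ Hp]]]]; exact Hp).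
  set (K := exp A / (1 - a)).
  intros u Hu.
  apply (nonincr (fun x => x + K * exp ((1 - a) * ln (Fint f x)))
     (fun u => 1 + K * (exp ((1 - a) * ln (Fint f u)) * ((1 - a) * ((- / f u) / Fint f u)))) U0);
   [| |apply Rle_refl|exact Hu].
  - intros x Hx. destruct (Hb x Hx) as [HF _]. apply k_deriv; auto; lra.
  - intros x Hx. destruct (Hb x Hx) as [HF Hfx].
    pose proof (Hfp x ltac:(lra)) as Hf.
    set (L := ln (Fint f x)).
    assert (HE : exp ((1 - a) * L) = exp (- a * L) * Fint f x).
    { replace ((1 - a) * L) with (- a * L + L) by ring. rewrite exp_plus. unfold L.
      rewrite exp_ln by exact HF. reflexivity. }
    rewrite HE. unfold K.
    replace (1 + exp A / (1 - a) * (exp (- a * L) * Fint f x * ((1 - a) * (- / f x / Fint f x))))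
      with (1 - (exp A * exp (- a * L)) / f x) by (field; repeat split; lra).
    fold L in Hfx.
    assert (1 <= exp A * exp (- a * L) / f x); [|lra].
    assert (0 <= (exp A * exp (- a * L) - f x) / f x) by (apply Rdiv_le_0_compat; lra).
    replace ((exp A * exp (- a * L) - f x) / f x) with (exp A * exp (- a * L) / f x - 1) in H
      by (field; lra). lra.
Qed.

Theorem lemma3p1 (f : R -> R) (qf : R) :
  cond_M f -> cond_S f -> cond_L f qf ->
  forall eps, 0 < eps < qf ->
  exists C, 1 <= C /\
    exists delta, 0 < delta /\
      forall sigma, 0 < sigma < delta ->
        / C * Rpower sigma (eps - qf) <= f (Finv f sigma) /\
        f (Finv f sigma) <= C * Rpower sigma (- eps - qf) /\
        Finv f sigma <= C * Rpower sigma (1 - qf - eps).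
Proof.
  intros HM HS HL eps Heps.
  assert (Hfp : forall u, 0 < u -> 0 < f u) by (destruct HM as [_ [_ [_ [_ Hp]]]]; exact Hp).
  assert (Hq1 : 1 <= qf).
  { destruct (Rle_lt_dec 1 qf) as [|Hlt]; [auto|exfalso].
    set (e := Rmin ((1 - qf) / 2) qf).
    assert (He : 0 < e <= qf).
    { unfold e. split; [apply Rmin_glb_lt; lra|apply Rmin_r]. }
    assert (He2 : e <= (1 - qf) / 2) by apply Rmin_l.
    destruct (bounds f qf HM HS HL e He) as [U0 [A [B [HU0 Hbd]]]].
    assert (Hk := k_bound f U0 A (qf + e) HM HS ltac:(lra) HU0
      (fun u Hu => conj (proj1 (Hbd u Hu)) (proj2 (proj2 (Hbd u Hu))))).
    set (k0 := U0 + exp A / (1 - (qf + e)) * exp ((1 - (qf + e)) * ln (Fint f U0))) in Hk.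
    specialize (Hk (U0 + Rabs k0 + 1) ltac:(pose proof (Rabs_pos k0); lra)).
    assert (0 < exp A / (1 - (qf + e))) by (apply Rdiv_lt_0_compat; [apply exp_pos|lra]).
    assert (0 < exp ((1 - (qf + e)) * ln (Fint f (U0 + Rabs k0 + 1)))) by apply exp_pos.
    pose proof (Rle_abs k0). nra. }
  destruct (bounds f qf HM HS HL eps (conj (proj1 Heps) (Rlt_le _ _ (proj2 Heps))))
    as [U0 [A [B [HU0 Hbd]]]].
  assert (Hk := k_bound f U0 A (qf + eps) HM HS ltac:(lra) HU0
      (fun u Hu => conj (proj1 (Hbd u Hu)) (proj2 (proj2 (Hbd u Hu))))).
  set (K := exp A / (1 - (qf + eps))) in Hk.
  assert (HK : K < 0).
  { unfold K, Rdiv. assert (0 < exp A) by apply exp_pos.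
    assert (/ (1 - (qf + eps)) < 0) by (apply Rinv_lt_0_compat; lra). nra. }
  set (k0 := U0 + K * exp ((1 - (qf + eps)) * ln (Fint f U0))) in Hk.
  assert (HFd := F_deriv f HM HS).
  assert (HFmono : forall x y, 0 < x -> x <= y -> Fint f y <= Fint f x).
  { intros x y Hx Hxy. apply (nonincr (Fint f) (fun u => - / f u) x); [| |lra|exact Hxy].
    - intros z Hz. apply HFd. lra.
    - intros z Hz. pose proof (Hfp z ltac:(lra)).
      assert (0 < / f z) by (apply Rinv_0_lt_compat; lra). lra. }
  assert (Hsmall : forall s, 0 < s -> exists u, U0 <= u /\ Fint f u < s).
  { intros s Hs. destruct (classic (exists u, U0 <= u /\ Fint f u < s)) as [|Hn]; [auto|exfalso].
    set (M := k0 - K * exp ((1 - (qf + eps)) * ln s)).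
    set (u := U0 + Rabs M + 1).
    assert (Hu : U0 <= u) by (unfold u; pose proof (Rabs_pos M); lra).
    assert (Hge : s <= Fint f u).
    { apply Rnot_lt_le. intro Hlt. apply Hn. exists u. split; auto. }
    specialize (Hk u Hu).
    assert (ln s <= ln (Fint f u)) by (apply ln_le'; auto).
    assert (exp ((1 - (qf + eps)) * ln (Fint f u)) <= exp ((1 - (qf + eps)) * ln s)).
    { apply exp_le'. nra. }
    assert (u <= M) by (unfold M; nra).
    pose proof (Rle_abs M). unfold u in *. lra. }
  assert (HF0 : 0 < Fint f U0) by (apply (Hbd U0); lra).
  set (C := Rmax (Rmax 1 (/ exp B)) (Rmax (exp A) (Rabs k0 - K))).
  assert (HC1 : 1 <= C) by (unfold C; eapply Rle_trans; [apply Rmax_l|apply Rmax_l]).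
  assert (HCB : / exp B <= C) by (unfold C; eapply Rle_trans; [apply Rmax_r|apply Rmax_l]).
  assert (HCA : exp A <= C) by (unfold C; eapply Rle_trans; [apply Rmax_l|apply Rmax_r]).
  assert (HCk : Rabs k0 - K <= C) by (unfold C; eapply Rle_trans; [apply Rmax_r|apply Rmax_r]).
  exists C. split; [exact HC1|].
  exists (Rmin (Fint f U0) 1). split; [apply Rmin_glb_lt; lra|].
  intros sigma Hs.
  assert (Hs1 : sigma < Fint f U0) by (pose proof (Rmin_l (Fint f U0) 1); lra).
  assert (Hs2 : sigma < 1) by (pose proof (Rmin_r (Fint f U0) 1); lra).
  destruct (Hsmall sigma (proj1 Hs)) as [u1 [Hu1 Hu1s]].
  assert (Hu1' : U0 < u1) by (destruct Hu1 as [|<-]; [auto|lra]).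
  destruct (Ranalysis5.IVT_interv (fun x => sigma - Fint f x) U0 u1) as [z [Hz Hzv]].
  { intros x Hx. apply (continuity_pt_minus (fun _ => sigma) (Fint f)).
    - apply continuity_pt_const. intros ? ?. reflexivity.
    - apply continuity_pt_filterlim. apply (ex_derive_continuous (Fint f) x).
      exists (- / f x). apply HFd. lra. }
  { exact Hu1'. }
  { cbv beta; lra. }
  { cbv beta; lra. }
  cbv beta in Hzv.
  assert (Hz0 : 0 < z) by lra. assert (Hz1 : Fint f z = sigma) by lra.
  assert (Hspec := epsilon_spec (inhabits 0) (fun u => 0 < u /\ Fint f u = sigma)
     (ex_intro _ z (conj Hz0 Hz1))).
  change (0 < Finv f sigma /\ Fint f (Finv f sigma) = sigma) in Hspec.
  set (v := Finv f sigma) in *.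
  destruct Hspec as [Hv0 Hv].
  assert (HvU : U0 <= v).
  { apply Rnot_lt_le. intro Hlt. assert (Fint f U0 <= Fint f v) by (apply HFmono; lra). lra. }
  destruct (Hbd v HvU) as [_ [Hlo Hup]].
  specialize (Hk v HvU).
  rewrite Hv in Hlo, Hup, Hk.
  unfold Rpower.
  assert (Hlns : ln sigma < 0).
  { assert (ln sigma < ln 1) by (apply ln_increasing; lra). rewrite ln_1 in *. lra. }
  assert (HP3 : 1 <= exp ((1 - qf - eps) * ln sigma)).
  { apply Rle_trans with (exp 0); [rewrite exp_0; lra|]. apply exp_le'. assert (1 - qf - eps < 0) by lra. nra. }
  replace (eps - qf) with (- (qf - eps)) by ring.
  replace (- eps - qf) with (- (qf + eps)) by ring.
  replace (1 - (qf + eps)) with (1 - qf - eps) in Hk by ring.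
  pose proof (exp_pos (- (qf - eps) * ln sigma)) as HP1.
  pose proof (exp_pos (- (qf + eps) * ln sigma)) as HP2.
  pose proof (exp_pos B) as HB. pose proof (exp_pos A) as HA.
  split; [|split].
  - assert (HiC : / C <= exp B).
    { rewrite <- (Rinv_inv (exp B)). apply Rinv_le_contravar; [apply Rinv_0_lt_compat; lra|exact HCB]. }
    eapply Rle_trans; [|exact Hlo]. apply Rmult_le_compat_r; lra.
  - eapply Rle_trans; [exact Hup|]. apply Rmult_le_compat_r; lra.
  - set (P3 := exp ((1 - qf - eps) * ln sigma)) in *.
    pose proof (Rle_abs k0). pose proof (Rabs_pos k0).
    assert (k0 <= Rabs k0 * P3) by nra.
    assert ((Rabs k0 - K) * P3 <= C * P3) by (apply Rmult_le_compat_r; lra).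
    nra.
Qed.
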